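(* Let $(\Omega,d)$ be a compact metric space, $F$ a $k$-iterated contraction system on $\Omega$ with contraction ratio $\theta\in(0,1)$ and attractor $\Omega$, and $A:\Omega\to\mathbb{R}$ Lipschitz. Let $\mathscr{L}$ be the transfer operator, $\rho$ its spectral radius on $C(\Omega)$, $h$ a strictly positive Lipschitz function with $\mathscr{L}h=\rho h$, $\mathbb{P}\varphi=\mathscr{L}(h\varphi)/(\rho h)$ the normalized operator and $\mathbb{P}^*$ its dual. Let $C>0$, $\lambda\in(0,1)$ be constants, depending only on $\theta,\operatorname{Lip}(A),\operatorname{diam}\Omega$, such that $W_1((\mathbb{P}^* )^n\mu,(\mathbb{P}^* )^n\nu)\le C\lambda^nW_1(\mu,\nu)$ for all $n\in\mathbb{N}$ and all Borel probability measures $\mu,\nu$ on $\Omega$, and let $\mu$ be the (unique) Borel probability measure with $\mathbb{P}^*\mu=\mu$. Then for every Lipschitz $\zeta:\Omega\to\mathbb{R}$ with $\int\zeta\,d\mu=0$ and every $n\in\mathbb{N}$, \[\|\mathbb{P}^n\zeta\|_\infty+\operatorname{Lip}(\mathbb{P}^n\zeta)\le(1+\operatorname{diam}\Omega)\,C\,\operatorname{Lip}(\zeta)\,\lambda^n.\] Moreover, every strictly positive Lipschitz function $g$ with $\mathscr{L}g=\rho g$ is a constant multiple of $h$.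
   Context: A $k$-multiset is an unordered list of $k$ elements with repetitions allowed; sums over it count multiplicities. A $k$-iterated contraction system (ICS) on $\Omega$ with contraction ratio $\theta$ assigns to each $x\in\Omega$ a $k$-multiset $F(x)$ of elements of $\Omega$ such that for all $x,y$ there are enumerations $F(x)=\{x_1,\dots,x_k\}$, $F(y)=\{y_1,\dots,y_k\}$ with $d(x_i,y_i)\le\theta d(x,y)$; attractor $\Omega$ means $\Omega$ is the union of the underlying sets of the $F(x)$. Transfer operator: $\mathscr{L}f(x)=\sum_{y\in F(x)}e^{A(y)}f(y)$. The dual $\mathbb{P}^*$ acts on measures by $\int\varphi\,d(\mathbb{P}^*\mu)=\int\mathbb{P}\varphi\,d\mu$. $W_1$ is the 1-Wasserstein distance: $W_1(\mu,\nu)=\inf_\pi\int d(x,y)\,d\pi$ over couplings $\pi$ of $\mu,\nu$. $\operatorname{Lip}$ denotes the Lipschitz constant. *)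

(* Defs.v *)
From HB Require Import structures.
From mathcomp Require Import all_boot all_order all_algebra all_fingroup.
From mathcomp Require Import all_classical all_reals all_analysis.
Set Implicit Arguments. Unset Strict Implicit. Unset Printing Implicit Defensive.
Import Order.TTheory GRing.Theory Num.Theory.
Import numFieldNormedType.Exports.
Local Open Scope classical_set_scope.
Local Open Scope ring_scope.

Section MetricDefs.
Variables (R : realType) (T : Type) (dist : T -> T -> R).

Definition is_dmetric : Prop :=
  [/\ (forall x y, 0 <= dist x y),
      (forall x y, dist x y = 0 <-> x = y),
      (forall x y, dist x y = dist y x) &
      (forall x y z, dist x z <= dist x y + dist y z)].

Definition dopen (A : set T) : Prop :=
  forall x, A x -> exists2 e : R, 0 < e & forall y, dist x y < e -> A y.

Definition dcompact : Prop :=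
  forall (I : Type) (U : I -> set T), (forall i, dopen (U i)) ->
    (forall x, exists i, U i x) ->
    exists2 J : set I, finite_set J & forall x, exists2 i, J i & U i x.

Definition dcontinuous (f : T -> R) : Prop :=
  forall x (e : R), 0 < e -> exists2 del : R, 0 < del &
    forall y, dist x y < del -> `|f x - f y| < e.

Definition dlipschitz (f : T -> R) : Prop :=
  exists L : R, forall x y, `|f x - f y| <= L * dist x y.

(* Lipschitz constant (0 is included so that the sup is of a nonempty set) *)
Definition dLip (f : T -> R) : R :=
  sup ([set 0] `|` [set r | exists x y, x <> y /\ r = `|f x - f y| / dist x y]).

Definition dsupnorm (f : T -> R) : R :=
  sup ([set 0] `|` [set r | exists x, r = `|f x|]).

Definition ddiam : R := sup ([set 0] `|` [set r | exists x y, r = dist x y]).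

Definition dopnorm (L : (T -> R) -> (T -> R)) : R :=
  sup ([set 0] `|` [set r | exists f, [/\ dcontinuous f, dsupnorm f <= 1 & r = dsupnorm (L f)]]).

(* A k-multiset F(x) is represented by an enumeration F x : 'I_k -> T;
   k-iterated contraction system with ratio theta *)
Definition is_ICS (k : nat) (F : T -> 'I_k -> T) (theta : R) : Prop :=
  forall x y, exists s : 'S_k, forall i, dist (F x i) (F y (s i)) <= theta * dist x y.

(* attractor Omega: Omega is the union of the underlying sets of the F(x) *)
Definition has_attractor_all (k : nat) (F : T -> 'I_k -> T) : Prop :=
  forall z, exists x, exists i, F x i = z.

End MetricDefs.

Definition transfer (R : realType) (T : Type) (k : nat) (F : T -> 'I_k -> T)
  (A : T -> R) (f : T -> R) : T -> R :=
  fun x => \sum_(i < k) expR (A (F x i)) * f (F x i).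

Definition normalized_op (R : realType) (T : Type) (k : nat) (F : T -> 'I_k -> T)
  (A : T -> R) (h : T -> R) (rho : R) (phi : T -> R) : T -> R :=
  fun x => transfer F A (fun y => h y * phi y) x / (rho * h x).

Section MeasureDefs.
Local Open Scope ereal_scope.
Variables (d0 : measure_display) (T : measurableType d0) (R : realType).
Variable (dist : T -> T -> R).

Definition borel_of_metric : Prop :=
  (measurable : set (set T)) = <<s dopen dist >>.

(* mu' = P^* mu : int phi d mu' = int (P phi) d mu for all phi in C(Omega) *)
Definition is_dual_image (P : (T -> R) -> (T -> R)) (mu mu' : probability T R) : Prop :=
  forall phi : T -> R, dcontinuous dist phi ->
    \int[mu']_x (phi x)%:E = \int[mu]_x (P phi x)%:E.

Definition is_dual_iter (P : (T -> R) -> (T -> R)) (n : nat)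
  (mu mun : probability T R) : Prop :=
  exists c : nat -> probability T R,
    [/\ c 0%N = mu, c n = mun &
        forall j, (j < n)%N -> is_dual_image P (c j) (c j.+1)].

Definition dcoupling (mu nu : probability T R) (pi : probability (T * T)%type R) : Prop :=
  forall A : set T, measurable A ->
    pi (A `*` setT) = mu A /\ pi (setT `*` A) = nu A.

Definition W1 (mu nu : probability T R) : \bar R :=
  ereal_inf [set \int[pi]_z (dist z.1 z.2)%:E |
             pi in [set pi : probability (T * T)%type R | dcoupling mu nu pi]].

End MeasureDefs.

(* Main.v *)
Require Import Defs.
From HB Require Import structures.
From mathcomp Require Import all_boot all_order all_algebra all_fingroup.
From mathcomp Require Import all_classical all_reals all_analysis.
Import Order.TTheory GRing.Theory Num.Theory.
Import numFieldNormedType.Exports.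
Local Open Scope classical_set_scope.
Local Open Scope ring_scope.
From mathcomp Require Import ring lra.
From mathcomp Require Import measurable_realfun.
Import HBNNSimple.

Module Aux.
Set Implicit Arguments. Unset Strict Implicit. Unset Printing Implicit Defensive.

Section Metric.
Context (R : realType) (T : choiceType) (dist : T -> T -> R).
Hypothesis hm : is_dmetric dist.

Lemma dist_ge0 x y : 0 <= dist x y. Proof. by case: hm. Qed.
Lemma dist_sym x y : dist x y = dist y x. Proof. by case: hm. Qed.
Lemma dist_tri x y z : dist x z <= dist x y + dist y z. Proof. by case: hm. Qed.
Lemma dist_xx x : dist x x = 0. Proof. by case: hm => _ H _ _; apply/H. Qed.
Lemma dist_gt0 x y : x <> y -> 0 < dist x y.
Proof.
move=> xy; rewrite lt_neqAle dist_ge0 andbT; apply/eqP => H.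
by case: hm => _ H2 _ _; apply: xy; apply/H2.
Qed.
Arguments dist_gt0 {x y}.

Lemma lip_cont f : dlipschitz dist f -> dcontinuous dist f.
Proof.
move=> [L HL] x e e0; exists (e / (`|L| + 1)).
  by apply: divr_gt0 => //; rewrite ltr_wpDl.
move=> y dy; have d0 := dist_ge0 x y.
have H1 : dist x y * (`|L| + 1) < e by rewrite -ltr_pdivlMr // ltr_wpDl.
have H2 := HL x y; have H3 := ler_norm L; have H4 := normr_ge0 L.
apply: (le_lt_trans H2); nra.
Qed.

Lemma compact_cover (f c : T -> R) : dcompact dist -> dcontinuous dist f ->
  (forall x, 0 < c x) ->
  exists s : seq T, forall y, exists2 x, x \in s & `|f y - f x| < c x.
Proof.
move=> hc fc c0.
pose U := fun x => [set y | `|f y - f x| < c x].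
have Hop : forall x, dopen dist (U x).
  move=> x y /= Hy.
  have e0 : 0 < c x - `|f y - f x| by rewrite subr_gt0.
  have [del del0 Hd] := fc y _ e0.
  exists del => // z /Hd Hz.
  have : `|f z - f x| <= `|f y - f z| + `|f y - f x|.
    rewrite (_ : f z - f x = - (f y - f z) + (f y - f x)); last by ring.
    by rewrite (le_trans (ler_normD _ _)) // normrN.
  rewrite /U /=; lra.
have Hcov : forall y, exists x, U x y.
  by move=> x; exists x; rewrite /U /= subrr normr0.
have [J fJ HJ] := hc T U Hop Hcov.
exists (finmap.enum_fset (fset_set J)) => y; have [x Jx Ux] := HJ y.
by exists x => //; rewrite in_fset_set // inE.
Qed.

Lemma cont_bounded f : dcompact dist -> dcontinuous dist f ->
  exists M, forall y, `|f y| <= M.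
Proof.
move=> hc fc; have [s Hs] := @compact_cover f (fun _ => 1) hc fc (fun x => ltr01).
exists (\sum_(x <- undup s) (`|f x| + 1)) => y.
have [x xs Hx] := Hs y.
rewrite (bigD1_seq x) ?undup_uniq ?mem_undup //=.
have : 0 <= \sum_(i <- undup s | i != x) (`|f i| + 1).
  by apply: sumr_ge0 => i _; rewrite addr_ge0.
have : `|f y| <= `|f y - f x| + `|f x|.
  by rewrite (le_trans _ (ler_normD _ _)) // subrK.
lra.
Qed.

Lemma cont_pos_lb f : dcompact dist -> dcontinuous dist f ->
  (forall x, 0 < f x) -> exists2 m, 0 < m & forall y, m <= f y.
Proof.
move=> hc fc fp.
have [s Hs] := @compact_cover f (fun x => f x / 2) hc fc (fun x => divr_gt0 (fp x) (ltr0n _ 2)).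
set S := 1 + \sum_(x <- undup s) (2 / f x).
have S0 : 0 <= \sum_(x <- undup s) (2 / f x).
  by apply: sumr_ge0 => i _; rewrite divr_ge0 // ltW.
have Sp : 0 < S by rewrite /S; lra.
exists (S^-1); first by rewrite invr_gt0.
move=> y; have [x xs /= Hx] := Hs y.
have fx := fp x.
have H1 : 2 / f x <= S.
  rewrite /S (bigD1_seq x) ?undup_uniq ?mem_undup //=.
  have : 0 <= \sum_(i <- undup s | i != x) (2 / f i).
    by apply: sumr_ge0 => i _; rewrite divr_ge0 // ltW.
  lra.
have H2 : S^-1 <= f x / 2.
  rewrite -[f x / 2]invrK invf_div ler_pV2 ?inE ?unitfE ?divr_gt0 ?gt_eqF //; exact: divr_gt0.
have : f x - f y <= `|f y - f x| by rewrite distrC ler_norm.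
move=> Hn; have Hx2 := le_lt_trans Hn Hx; lra.
Qed.

Lemma dist_cont x0 : dcontinuous dist (dist x0).
Proof.
apply: lip_cont; exists 1 => x y; rewrite mul1r ler_norml.
have := dist_tri x0 x y; have := dist_tri x0 y x; rewrite (dist_sym y x).
lra.
Qed.

Lemma dist_bounded (x0 : T) : dcompact dist -> exists D, forall x y, dist x y <= D.
Proof.
move=> hc; have [M HM] := @cont_bounded (dist x0) hc (dist_cont x0).
exists (M + M) => x y; have := dist_tri x x0 y; rewrite (dist_sym x x0).
have := HM x; have := HM y; rewrite !ger0_norm ?dist_ge0 //; lra.
Qed.

Lemma ddiam_ub (x0 : T) : dcompact dist -> forall x y, dist x y <= ddiam dist.
Proof.
move=> hc x y; have [D HD] := dist_bounded x0 hc.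
apply: sup_upper_bound; last by right; exists x, y.
split; first by exists 0; left.
exists (Num.max D 0) => r [-> | [a [b ->]]]; first by rewrite le_max lexx orbT.
by rewrite le_max HD.
Qed.

Lemma ddiam_ge0 (x0 : T) : dcompact dist -> 0 <= ddiam dist.
Proof. by move=> hc; rewrite (le_trans _ (ddiam_ub x0 hc x0 x0)) // dist_ge0. Qed.

Lemma dLip_ub f : dlipschitz dist f -> forall x y, `|f x - f y| <= dLip dist f * dist x y.
Proof.
move=> [L HL] x y; have [->|xy] := pselect (x = y).
  by rewrite subrr normr0 dist_xx mulr0.
have dp := dist_gt0 xy.
rewrite -ler_pdivrMr //; apply: sup_upper_bound; last by right; exists x, y.
split; first by exists 0; left.
exists (Num.max L 0) => r [-> | [a [b [ab ->]]]]; first by rewrite le_max lexx orbT.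
rewrite le_max; apply/orP; left; rewrite ler_pdivrMr //; exact: dist_gt0.
Qed.

Lemma dLip_ge0 f : dlipschitz dist f -> 0 <= dLip dist f.
Proof.
move=> [L HL]; apply: sup_upper_bound; last by left.
split; first by exists 0; left.
exists (Num.max L 0) => r [-> | [a [b [ab ->]]]]; first by rewrite le_max lexx orbT.
rewrite le_max; apply/orP; left; rewrite ler_pdivrMr //; exact: dist_gt0.
Qed.

Lemma dLip_le f L : 0 <= L -> (forall x y, `|f x - f y| <= L * dist x y) ->
  dLip dist f <= L.
Proof.
move=> L0 HL; apply: ge_sup; first by exists 0; left.
move=> r [-> // | [a [b [ab ->]]]].
by rewrite ler_pdivrMr //; exact: dist_gt0.
Qed.

Lemma dsupnorm_le (f : T -> R) M : 0 <= M -> (forall x, `|f x| <= M) -> dsupnorm f <= M.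
Proof.
move=> M0 HM; apply: ge_sup; first by exists 0; left.
by move=> r [-> // | [a ->]].
Qed.

End Metric.

Section Cont.
Context (R : realType) (T : choiceType) (dist : T -> T -> R).
Hypothesis hm : is_dmetric dist.

Lemma cont_comp (g : R -> R) (f : T -> R) :
  (forall x, {for f x, continuous g}) -> dcontinuous dist f ->
  dcontinuous dist (fun x => g (f x)).
Proof.
move=> gc fc x e e0.
have /cvgrPdist_lt/(_ e e0)/nbhs_ballP [d1 d10 Hd1] := gc x.
have [d2 d20 Hd2] := fc x d1 d10.
by exists d2 => // y /Hd2 Hy; apply: Hd1.
Qed.

Lemma cont_cst (c : R) : dcontinuous dist (fun _ => c).
Proof. by move=> x e e0; exists 1 => // y _; rewrite subrr normr0. Qed.

Lemma contD (f g : T -> R) : dcontinuous dist f -> dcontinuous dist g ->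
  dcontinuous dist (fun x => f x + g x).
Proof.
move=> fc gc x e e0.
have e20 : 0 < e / 2 by rewrite divr_gt0.
have [d1 d10 H1] := fc x _ e20; have [d2 d20 H2] := gc x _ e20.
exists (Num.min d1 d2); first by rewrite lt_min d10 d20.
move=> y; rewrite lt_min => /andP[/H1 h1 /H2 h2].
have : `|f x + g x - (f y + g y)| <= `|f x - f y| + `|g x - g y|.
  by rewrite (_ : f x + g x - (f y + g y) = (f x - f y) + (g x - g y)) ?ler_normD //; ring.
lra.
Qed.

Lemma contM (f g : T -> R) : dcontinuous dist f -> dcontinuous dist g ->
  dcontinuous dist (fun x => f x * g x).
Proof.
move=> fc gc x e e0.
set a := `|f x| + 1; set b := `|g x| + 1.
have a0 : 0 < a by rewrite /a ltr_wpDl.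
have b0 : 0 < b by rewrite /b ltr_wpDl.
have e1p : 0 < e / (2 * b) by rewrite divr_gt0 // mulr_gt0.
have e2p : 0 < Num.min 1 (e / (2 * a)) by rewrite lt_min ltr01 divr_gt0 // mulr_gt0.
have [d1 d10 H1] := fc x _ e1p; have [d2 d20 H2] := gc x _ e2p.
exists (Num.min d1 d2); first by rewrite lt_min d10 d20.
move=> y; rewrite lt_min => /andP[/H1 h1 /H2 h2].
move: h2; rewrite lt_min => /andP[h21 h22].
have E1 : e / (2 * b) * b = e / 2 by field; rewrite gt_eqF.
have E2 : e / (2 * a) * a = e / 2 by field; rewrite gt_eqF.
have Hgy : `|g y| <= `|g x| + `|g x - g y|.
  have E : g y = g x - (g x - g y) by ring.
  by rewrite [in X in X <= _]E; exact: ler_normB.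
have E3 : f x * g x - f y * g y = f x * (g x - g y) + g y * (f x - f y) by ring.
rewrite E3; apply: le_lt_trans (ler_normD _ _) _; rewrite !normrM.
have P1 : `|f x| * `|g x - g y| <= a * (e / (2 * a)).
  apply: ler_pM => //; first by rewrite /a lerDl.
  by apply: ltW; apply: lt_le_trans h22 _.
have P2 : `|g y| * `|f x - f y| < b * (e / (2 * b)).
  apply: (le_lt_trans (y := b * `|f x - f y|)).
    by apply: ler_wpM2r => //; rewrite /b; lra.
  by rewrite ltr_pM2l.
rewrite mulrC in E1; rewrite mulrC in E2; lra.
Qed.

End Cont.

Section IntGen.
Context (d : measure_display) (T : measurableType d) (R : realType).
Local Open Scope ereal_scope.

Lemma int_mono_nm (mu : {measure set T -> \bar R}) (f g : T -> \bar R) :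
  (forall x, 0 <= f x) -> (forall x, f x <= g x) ->
  \int[mu]_x f x <= \int[mu]_x g x.
Proof.
move=> f0 fg; have g0 x : 0 <= g x by exact: le_trans (f0 x) (fg x).
rewrite !ge0_integralTE //; apply: ereal_sup_le => _ [h Hh <-].
by exists h => //= x; exact: le_trans (Hh x) (fg x).
Qed.

Lemma int_le_cst (P : probability T R) (g : T -> \bar R) (c : R) :
  (forall x, 0 <= g x <= c%:E) -> \int[P]_x g x <= c%:E.
Proof.
move=> Hg; have g0 x : 0 <= g x by case/andP: (Hg x).
rewrite ge0_integralTE //; apply: ge_ereal_sup => _ [h Hh <-].
rewrite -integralT_nnsfun.
apply: (le_trans (y := \int[P]_x (cst c%:E) x)).
  apply: ge0_le_integral => //.
  - by move=> x _; rewrite lee_fin.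
  - exact/measurable_EFinP/measurable_funP.
  - by move=> x _; apply: le_trans (Hh x) _; case/andP: (Hg x).
rewrite integral_cst //.
set m := (X in c%:E * X).
have -> : m = 1 by rewrite /m; exact: probability_setT.
by rewrite mule1.
Qed.

Lemma int_dirac_le (a : T) (g : T -> \bar R) :
  (forall x, 0 <= g x) -> \int[\d_a]_x g x <= g a.
Proof.
move=> g0; rewrite ge0_integralTE //; apply: ge_ereal_sup => _ [h Hh <-].
rewrite -integralT_nnsfun integral_dirac //; last exact/measurable_EFinP/measurable_funP.
by rewrite diracT mul1e; apply: Hh.
Qed.

End IntGen.

Section Mix.
Context (d : measure_display) (T : measurableType d) (R : realType).
Context (k : nat) (p : 'I_k -> probability T R) (w : 'I_k -> R) (q : probability T R).
Local Open Scope ereal_scope.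

Definition mixb := [forall i, (0 <= w i)%R] && ((\sum_(i < k) w i)%R == 1%R).

Let wn_ge0 (i : 'I_k) : (0 <= Num.max (w i) 0)%R.
Proof. by rewrite le_max lexx orbT. Qed.

Let wn (i : 'I_k) : {nonneg R} := NngNum (wn_ge0 i).

Definition mixms : {measure set T -> \bar R}^nat := fun n =>
  match @insub nat (fun n => (n < k)%N) 'I_k n with
  | Some i => mscale (wn i) (p i)
  | None => mzero
  end.

Definition mixf (B : set T) : \bar R := if mixb then msum mixms k B else q B.

Let mixf0 : mixf set0 = 0.
Proof. by rewrite /mixf; case: mixb; rewrite measure0. Qed.

Let mixf_ge0 B : 0 <= mixf B.
Proof. by rewrite /mixf; case: mixb; rewrite measure_ge0. Qed.

Let mixf_sa : semi_sigma_additive mixf.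
Proof. by rewrite /mixf; case: mixb; exact: measure_semi_sigma_additive. Qed.

HB.instance Definition _ := isMeasure.Build _ _ _ mixf mixf0 mixf_ge0 mixf_sa.

Lemma mixms_val (i : 'I_k) : mixms i = mscale (wn i) (p i) :> (set T -> \bar R).
Proof. by rewrite /mixms valK. Qed.

Let mixfT : mixf setT = 1.
Proof.
rewrite /mixf; case Hb: mixb; last exact: probability_setT.
move: Hb => /andP[/forallP w0 /eqP w1].
rewrite /msum /=.
under eq_bigr => i _ do rewrite mixms_val /mscale /= probability_setT mule1.
rewrite sumEFin; congr (_%:E); rewrite -w1; apply: eq_bigr => i _.
by rewrite max_l.
Qed.

HB.instance Definition _ := Measure_isProbability.Build _ _ _ mixf mixfT.

Definition mix : probability T R := mixf.

Lemma mix_integral (f : T -> \bar R) : mixb -> measurable_fun setT f ->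
  (forall x, 0 <= f x) ->
  \int[mix]_x f x = \sum_(i < k) (w i)%:E * \int[p i]_x f x.
Proof.
move=> Hb mf f0.
have -> : \int[mix]_x f x = \int[msum mixms k]_x f x.
  by apply: eq_measure_integral => A _ _; rewrite /= /mixf Hb.
rewrite ge0_integral_measure_sum //; apply: eq_bigr => i _.
move: Hb => /andP[/forallP w0 _].
have -> : \int[mixms i]_x f x = \int[mscale (wn i) (p i)]_x f x.
  by apply: eq_measure_integral => A _ _; rewrite mixms_val.
by rewrite ge0_integral_mscale //= max_l.
Qed.

End Mix.

Section Main.
Context (R : realType) (d0 : measure_display) (T : measurableType d0)
  (dist : T -> T -> R) (k : nat) (F : T -> 'I_k -> T) (theta : R) (A : T -> R)
  (rho : R) (h : T -> R).
Hypotheses (hm : is_dmetric dist) (hc : dcompact dist) (hb : borel_of_metric dist)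
  (hics : is_ICS dist F theta) (hatt : has_attractor_all F)
  (hA : dlipschitz dist A) (hpos : forall x, 0 < h x) (hh : dlipschitz dist h)
  (heig : forall x, transfer F A h x = rho * h x).

Let P := normalized_op F A h rho.

Lemma k_gt0 : (0 < k)%N.
Proof. by have [x [i _]] := hatt point; case: k i => [[]|]. Qed.

Lemma rho_gt0 : 0 < rho.
Proof.
have [x [i _]] := hatt point.
have H : 0 < transfer F A h point.
  rewrite /transfer (bigD1 i) //=; apply: ltr_pwDl.
    by rewrite mulr_gt0 ?expR_gt0.
  by apply: sumr_ge0 => j _; rewrite mulr_ge0 ?expR_ge0 // ltW.
by move: H; rewrite heig pmulr_lgt0.
Qed.

Definition wt (y : T) (i : 'I_k) : R :=
  expR (A (F y i)) * h (F y i) / (rho * h y).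

Lemma wt_ge0 y i : 0 <= wt y i.
Proof.
by rewrite /wt divr_ge0 ?mulr_ge0 ?expR_ge0 ?ltW ?hpos ?rho_gt0.
Qed.

Lemma wt_sum y : \sum_(i < k) wt y i = 1.
Proof.
rewrite /wt -mulr_suml.
have -> : \sum_(i < k) expR (A (F y i)) * h (F y i) = transfer F A h y by [].
rewrite heig divff // mulf_neq0 // gt_eqF ?rho_gt0 ?hpos //.
Qed.

Lemma P_eq phi y : P phi y = \sum_(i < k) wt y i * phi (F y i).
Proof.
rewrite /P /normalized_op /transfer mulr_suml; apply: eq_bigr => i _.
rewrite /wt; ring.
Qed.

Lemma iterP_lin j a b f g y :
  iter j P (fun z => a * f z + b * g z) y = a * iter j P f y + b * iter j P g y.
Proof.
elim: j y => [//|j IH] y /=.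
rewrite !P_eq mulr_sumr mulr_sumr -big_split /=; apply: eq_bigr => i _.
rewrite IH; ring.
Qed.

Lemma wt_mixb y : mixb (wt y).
Proof.
apply/andP; split; first by apply/forallP => i; exact: wt_ge0.
by rewrite wt_sum.
Qed.

Fixpoint nu (j : nat) (y : T) : probability T R :=
  match j with
  | 0 => \d_y
  | j'.+1 => mix (fun i => nu j' (F y i)) (wt y) \d_y
  end.

Local Open Scope ereal_scope.

Lemma nu_int_ge0 (phi : T -> R) : measurable_fun setT phi ->
  (forall x, (0 <= phi x)%R) ->
  forall j y, \int[nu j y]_x (phi x)%:E = (iter j P phi y)%:E.
Proof.
move=> mphi phi0; elim => [|j IH] y.
  by rewrite /= integral_dirac ?diracT ?mul1e //; exact/measurable_EFinP.
rewrite /= mix_integral; first last.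
- by move=> x; rewrite lee_fin.
- exact/measurable_EFinP.
- exact: wt_mixb.
under eq_bigr => i _ do rewrite IH.
by rewrite P_eq sumEFin.
Qed.

Lemma nu_int (phi : T -> R) : measurable_fun setT phi ->
  forall j y, \int[nu j y]_x (phi x)%:E = (iter j P phi y)%:E.
Proof.
move=> mphi j y.
pose pp := fun x => Num.max (phi x) 0%R.
pose pn := fun x => Num.max (- phi x)%R 0%R.
have mpp : measurable_fun setT pp by apply: measurable_maxr => //.
have mpn : measurable_fun setT pn.
  by apply: measurable_maxr => //; exact: measurableT_comp.
have epn : forall x, phi x = (1 * pp x + (-1) * pn x)%R.
  move=> x; rewrite /pp /pn /=; have [p0|p0] := leP 0%R (phi x).
    by rewrite max_r ?oppr_le0 //; ring.
  by rewrite max_l ?oppr_ge0 ?(ltW p0) //; ring.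
rewrite integralE.
have -> : (fun x => (phi x)%:E)^\+ = (fun x => (pp x)%:E).
  by apply: funext => x; rewrite funeposE EFin_max.
have -> : (fun x => (phi x)%:E)^\- = (fun x => (pn x)%:E).
  by apply: funext => x; rewrite funenegE EFin_max.
rewrite !nu_int_ge0 //; last by move=> x; rewrite le_max lexx orbT.
  2: by move=> x; rewrite le_max lexx orbT.
have -> : phi = (fun x => 1 * pp x + (-1) * pn x)%R by apply: funext.
by rewrite iterP_lin; congr _%:E; rewrite mul1r mulN1r.
Qed.

Local Close Scope ereal_scope.

Lemma cont_meas f : dcontinuous dist f -> measurable_fun setT f.
Proof.
move=> fc; apply: (measurability _ (RGenOInfty.measurableE R)) => // _ [_ [a ->] <-].
rewrite setTI hb; apply: sub_sigma_algebra => y /=; rewrite in_itv /= andbT => Hy.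
have e0 : 0 < f y - a by rewrite subr_gt0.
have [del del0 Hd] := fc y _ e0.
exists del => // z /Hd Hz; rewrite /= in_itv /= andbT.
have : f y - f z <= `|f y - f z| by exact: ler_norm.
lra.
Qed.

Lemma cont_transfer g : dcontinuous dist g -> dcontinuous dist (transfer F A g).
Proof.
move=> gc.
pose G z := expR (A z) * g z.
have Gc : dcontinuous dist G.
  apply: contM => //; apply: (@cont_comp _ _ _ expR A).
    by move=> x; exact: continuous_expR.
  exact (lip_cont hm hA).
move=> x e e0.
have ek : 0 < e / k.+1%:R by rewrite divr_gt0.
have /choice [del Hdel] : forall i : 'I_k, exists del : R, 0 < del /\
    forall z, dist (F x i) z < del -> `|G (F x i) - G z| < e / k.+1%:R.
  by move=> i; have [del del0 Hd] := Gc (F x i) _ ek; exists del.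
pose S := 1 + \sum_(i < k) (del i)^-1.
have S0 : 0 <= \sum_(i < k) (del i)^-1.
  by apply: sumr_ge0 => i _; rewrite invr_ge0 ltW //; case: (Hdel i).
have Sp : 0 < S by rewrite /S; lra.
have Sdel : forall i, S^-1 <= del i.
  move=> i; have di := proj1 (Hdel i).
  have : (del i)^-1 <= S.
    rewrite /S (bigD1 i) //=.
    have : 0 <= \sum_(j < k | j != i) (del j)^-1.
      by apply: sumr_ge0 => j _; rewrite invr_ge0 ltW //; case: (Hdel j).
    lra.
  by move=> H; rewrite -[del i]invrK lef_pV2 // ?posrE ?invr_gt0.
have tp : 0 < `|theta| + 1 by rewrite ltr_wpDl.
exists (S^-1 / (`|theta| + 1)); first by rewrite divr_gt0 // invr_gt0.
move=> y dy; have [s Hs] := hics x y.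
have dxy0 := dist_ge0 hm x y.
have dS : `|theta| * dist x y < S^-1.
  move: dy; rewrite ltr_pdivlMr // => dy.
  have := ler_norm theta; nra.
rewrite /transfer [X in _ - X](reindex_inj (@perm_inj _ s)) -sumrB.
apply: (le_lt_trans (ler_norm_sum _ _ _)).
apply: (le_lt_trans (y := \sum_(i < k) (e / k.+1%:R))).
  apply: ler_sum => i _; apply: ltW.
  case: (Hdel i) => _ Hi; apply: Hi.
  apply: (le_lt_trans (Hs i)); apply: (lt_le_trans _ (Sdel i)).
  apply: le_lt_trans dS; apply: ler_wpM2r => //; exact: ler_norm.
have H1 : e / k.+1%:R *+ k.+1 = e by rewrite -mulr_natr divfK // pnatr_eq0.
rewrite sumr_const card_ord; rewrite mulrS in H1; move: H1 ek; set q := e / k.+1%:R; set r := q *+ k; lra.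
Qed.

Lemma P_cont phi : dcontinuous dist phi -> dcontinuous dist (P phi).
Proof.
move=> phic; apply: contM.
  by apply: cont_transfer; apply: contM => //; exact (lip_cont hm hh).
apply: (@cont_comp _ _ _ GRing.inv (fun y => rho * h y)).
  by move=> x; apply: inv_continuous; rewrite mulf_neq0 // gt_eqF ?rho_gt0 ?hpos.
by apply: contM; [exact: cont_cst | exact (lip_cont hm hh)].
Qed.

Local Open Scope ereal_scope.

Lemma nu_dual j x : is_dual_image dist P (nu j x) (nu j.+1 x).
Proof.
move=> phi phic.
rewrite nu_int; last exact: cont_meas.
rewrite nu_int; last by apply: cont_meas; exact: P_cont.
by rewrite iterSr.
Qed.

Lemma nu_iter n x : is_dual_iter dist P n (nu 0 x) (nu n x).
Proof. by exists (fun j => nu j x); split => // j _; exact: nu_dual. Qed.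

Lemma mu_iter n (mu : probability T R) : is_dual_image dist P mu mu ->
  is_dual_iter dist P n mu mu.
Proof. by move=> H; exists (fun _ => mu); split. Qed.

Definition fstm : {mfun (T * T)%type >-> T} :=
  HB.pack (@fst T T) (isMeasurableFun.Build _ _ _ _ (@fst T T) measurable_fst).
Definition sndm : {mfun (T * T)%type >-> T} :=
  HB.pack (@snd T T) (isMeasurableFun.Build _ _ _ _ (@snd T T) measurable_snd).
Definition pairm (x : T) : {mfun T >-> (T * T)%type} :=
  HB.pack (pair x) (isMeasurableFun.Build _ _ _ _ (pair x) (pair1_measurable x)).

Lemma W1_dirac x y : W1 dist (nu 0 x) (nu 0 y) <= (dist x y)%:E.
Proof.
rewrite /W1.
apply: (le_trans (y := \int[(\d_(x, y) : probability (T * T)%type R)]_z (dist z.1 z.2)%:E)).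
  apply: ereal_inf_lbound; exists (\d_(x, y) : probability (T * T)%type R) => //.
  move=> B mB; rewrite /= !diracE; split; congr ((nat_of_bool _)%:R%:E).
    apply/idP/idP => /set_mem H; apply/mem_set; [by case: H | by split].
  apply/idP/idP => /set_mem H; apply/mem_set; [by case: H | by split].
apply: (le_trans (int_dirac_le _ _)) => // z; rewrite lee_fin; exact: dist_ge0.
Qed.

Lemma W1_dirac_mu x (mu : probability T R) :
  W1 dist (nu 0 x) mu <= (ddiam dist)%:E.
Proof.
rewrite /W1.
apply: (le_trans (y := \int[distribution mu (pairm x)]_z (dist z.1 z.2)%:E)).
  apply: ereal_inf_lbound; exists (distribution mu (pairm x)) => //.
  move=> B mB; split.
    rewrite /= diracE /distribution /pushforward.
    case: (boolP (x \in B)) => xB.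
      rewrite (_ : _ @^-1` _ = setT); first exact: probability_setT.
      by apply/seteqP; split => // z _; split => //; exact/set_mem.
    rewrite (_ : _ @^-1` _ = set0); first exact: measure0.
    by apply/seteqP; split => // z [/mem_set H _]; rewrite H in xB.
  rewrite /= /distribution /pushforward.
  by congr (mu _); apply/seteqP; split => z //= [].
apply: int_le_cst => z; rewrite !lee_fin dist_ge0 //=; exact: ddiam_ub.
Qed.

Lemma W1_lb (z : T -> R) : (forall a b, (`|z a - z b| <= dist a b)%R) ->
  forall (m1 m2 : probability T R) a1 a2,
  \int[m1]_x (z x)%:E = a1%:E -> \int[m2]_x (z x)%:E = a2%:E ->
  (a1 - a2)%R%:E <= W1 dist m1 m2.
Proof.
move=> Hz m1 m2 a1 a2 H1 H2.
have zc : dcontinuous dist z.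
  by apply: (lip_cont hm); exists 1%R => a b; rewrite mul1r.
have mz := cont_meas zc.
have [M HM] := cont_bounded hc zc.
have intz (pi : probability (T * T)%type R) (f : T * T -> T) :
    measurable_fun setT f -> pi.-integrable setT (EFin \o (fun p => z (f p))).
  move=> mf; apply: measurable_bounded_integrable => //.
    by apply: (le_lt_trans (probability_le1 pi measurableT)); rewrite ltry.
    exact: measurableT_comp.
  exists M; split; first by rewrite num_real.
  by move=> M' HM' p _ /=; rewrite (le_trans (HM _)) // ltW.
rewrite /W1; apply/ereal_infP => _ [pi Hpi <-].
have E1 : \int[m1]_x (z x)%:E = \int[pi]_p (z p.1)%:E.
  transitivity (\int[distribution pi fstm]_x (z x)%:E).
    apply: eq_measure_integral => B mB _.
    apply: esym; transitivity (pi (B `*` setT)); last exact: (Hpi B mB).1.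
    rewrite /= /distribution /pushforward; congr (pi _).
    by apply/seteqP; split => p //= [].
  rewrite integral_distribution //; first exact/measurable_EFinP.
  exact: (intz pi fst measurable_fst).
have E2 : \int[m2]_x (z x)%:E = \int[pi]_p (z p.2)%:E.
  transitivity (\int[distribution pi sndm]_x (z x)%:E).
    apply: eq_measure_integral => B mB _.
    apply: esym; transitivity (pi (setT `*` B)); last exact: (Hpi B mB).2.
    rewrite /= /distribution /pushforward; congr (pi _).
    by apply/seteqP; split => p //= [].
  rewrite integral_distribution //; first exact/measurable_EFinP.
  exact: (intz pi snd measurable_snd).
rewrite EFinB -H1 -H2 E1 E2 -integralB_EFin //; last 2 first.
  exact: (intz pi fst measurable_fst).
  exact: (intz pi snd measurable_snd).
set g := (fun p => (z p.1)%:E - (z p.2)%:E).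
rewrite integralE.
apply: (le_trans (leeB (lexx _) (integral_ge0 _ _))); first by move=> p _.
rewrite sube0; apply: int_mono_nm => p //.
rewrite funeposE ge_max -EFinB !lee_fin (dist_ge0 hm) andbT.
exact: le_trans (ler_norm _) (Hz _ _).
Qed.

Lemma intg (m : probability T R) f : dcontinuous dist f -> m.-integrable setT (EFin \o f).
Proof.
move=> fc; have [M HM] := cont_bounded hc fc.
apply: measurable_bounded_integrable => //.
  by apply: (le_lt_trans (probability_le1 m measurableT)); rewrite ltry.
  exact: cont_meas.
exists M; split; first by rewrite num_real.
by move=> M' HM' p _ /=; rewrite (le_trans (HM _)) // ltW.
Qed.

Local Close Scope ereal_scope.

Variables (C lam : R).
Hypotheses (HC : 0 < C) (Hlam : 0 < lam < 1).
Hypothesis HW : forall (n : nat) (m1 m2 m1n m2n : probability T R),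
     is_dual_iter dist P n m1 m1n ->
     is_dual_iter dist P n m2 m2n ->
     (W1 dist m1n m2n <= (C * lam ^+ n)%:E * W1 dist m1 m2)%E.

Lemma K_ge0 n : 0 <= C * lam ^+ n.
Proof. by case/andP: Hlam => l0 _; rewrite mulr_ge0 ?exprn_ge0 ?ltW. Qed.

Lemma scale_lip z L s : 0 < L -> `|s| = 1 ->
  (forall a b, `|z a - z b| <= L * dist a b) ->
  forall a b, `|(s / L * z a + 0 * z a) - (s / L * z b + 0 * z b)| <= dist a b.
Proof.
move=> Lp hs Hz a b.
rewrite !mul0r !addr0 -mulrBr normrM normrM hs mul1r normfV (gtr0_norm Lp).
by rewrite ler_pdivrMl // Hz.
Qed.

Lemma scale_cont z L s : 0 < L -> `|s| = 1 ->
  (forall a b, `|z a - z b| <= L * dist a b) ->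
  dcontinuous dist (fun a => s / L * z a + 0 * z a).
Proof.
move=> Lp hs Hz; apply: (lip_cont hm); exists 1 => a b; rewrite mul1r.
exact: scale_lip.
Qed.

Lemma lip_bound z L : 0 < L -> (forall a b, `|z a - z b| <= L * dist a b) ->
  forall n x y, iter n P z x - iter n P z y <= L * (C * lam ^+ n) * dist x y.
Proof.
move=> Lp Hz n x y.
have hs : `|1 : R| = 1 by rewrite normr1.
have Hz1 := scale_lip Lp hs Hz.
have mz1 := cont_meas (scale_cont Lp hs Hz).
have H := W1_lb Hz1 (nu_int mz1 n x) (nu_int mz1 n y).
rewrite !iterP_lin in H.
have H2 := HW (nu_iter n x) (nu_iter n y).
have H3 := W1_dirac x y.
have Hb : 1 / L * iter n P z x + 0 * iter n P z x -
    (1 / L * iter n P z y + 0 * iter n P z y) <= C * lam ^+ n * dist x y.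
  rewrite -lee_fin EFinM; apply: (le_trans H); apply: (le_trans H2).
  by apply: lee_wpmul2l => //; rewrite lee_fin K_ge0.
move: Hb; rewrite !mul0r !addr0 -mulrBr mul1r => Hb.
have := ler_wpM2l (ltW Lp) Hb.
by rewrite mulrA mulfV ?gt_eqF // mul1r mulrA.
Qed.

Lemma sup_bound_s z L s (mu : probability T R) : 0 < L -> `|s| = 1 ->
  (forall a b, `|z a - z b| <= L * dist a b) ->
  is_dual_image dist P mu mu -> (\int[mu]_x (z x)%:E = 0)%E ->
  forall n x, s * iter n P z x <= L * (C * lam ^+ n) * ddiam dist.
Proof.
move=> Lp hs Hz Hmu Hmean n x.
have Hz1 := scale_lip Lp hs Hz.
have cz1 := scale_cont Lp hs Hz.
have mz1 := cont_meas cz1.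
have zc : dcontinuous dist z by apply: (lip_cont hm); exists L.
have I0 : (\int[mu]_x ((s / L * z x + 0 * z x)%:E) = 0%:E)%E.
  under eq_integral do rewrite mul0r addr0 EFinM.
  by rewrite integralZl //; [rewrite Hmean mule0 | exact: intg].
have H := W1_lb Hz1 (nu_int mz1 n x) I0.
rewrite !iterP_lin in H.
have H2 := HW (nu_iter n x) (mu_iter n Hmu).
have H3 := W1_dirac_mu x mu.
have Hb : s / L * iter n P z x + 0 * iter n P z x - 0 <= C * lam ^+ n * ddiam dist.
  rewrite -lee_fin EFinM; apply: (le_trans H); apply: (le_trans H2).
  by apply: lee_wpmul2l => //; rewrite lee_fin K_ge0.
move: Hb; rewrite !mul0r !addr0 subr0 mulrAC => Hb.
have := ler_wpM2l (ltW Lp) Hb.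
by rewrite mulrA [L * (s * _)]mulrC mulfK ?gt_eqF // mulrA.
Qed.

Lemma le0_geo (a c : R) : (forall n, a <= c * lam ^+ n) -> a <= 0.
Proof.
move=> H; rewrite leNgt; apply/negP => ap.
case/andP: Hlam => l0 l1.
have cp : 0 < c by have := H 0%N; rewrite expr0 mulr1 => /(lt_le_trans ap).
have : `|lam| < 1 by rewrite gtr0_norm.
move=> /cvg_expr /cvgrPdist_lt /(_ (a / c)) /(_ (divr_gt0 ap cp)) [N _ HN].
have := HN N (leqnn N); rewrite /= sub0r normrN gtr0_norm ?exprn_gt0 //.
rewrite ltr_pdivlMr // => Hl; have := H N; rewrite mulrC; lra.
Qed.

Lemma part1 (mu : probability T R) : is_dual_image dist P mu mu ->
  forall z : T -> R, dlipschitz dist z -> (\int[mu]_x (z x)%:E = 0)%E ->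
  forall n : nat,
    dsupnorm (iter n P z) + dLip dist (iter n P z)
      <= (1 + ddiam dist) * C * dLip dist z * lam ^+ n.
Proof.
move=> Hmu z zl Hmean n.
have HL := dLip_ub hm zl.
have D0 := ddiam_ge0 hm point hc.
have K0 := K_ge0 n.
move: (dLip_ge0 hm zl); rewrite le_eqVlt => /orP[/eqP L0|Lp].
  have zc : forall a, z a = z point.
    move=> a; have := HL a point; rewrite -L0 mul0r normr_le0 subr_eq0.
    by move/eqP.
  have z0 : z point = 0.
    move: Hmean; under eq_integral do rewrite zc.
    rewrite integral_cst //.
    set m := (X in (_ * X)%E); have -> : m = 1%E by exact: probability_setT.
    by rewrite mule1 => -[].
  have Q0 : forall y, iter n P z y = 0.
    move=> y; have -> : z = (fun a => 0 * z a + 0 * z a).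
      by apply: funext => a; rewrite zc z0 mul0r addr0.
    by rewrite iterP_lin !mul0r addr0.
  rewrite -L0 mulr0 mul0r.
  have H1 : dsupnorm (iter n P z) <= 0.
    by apply: dsupnorm_le => // y; rewrite Q0 normr0.
  have H2 : dLip dist (iter n P z) <= 0.
    by apply: (dLip_le hm) => // x y; rewrite !Q0 subrr normr0 mul0r.
  lra.
have hs1 : `|1 : R| = 1 by rewrite normr1.
have hs2 : `|-1 : R| = 1 by rewrite normrN normr1.
have Hb1 : forall x, `|iter n P z x| <= (dLip dist z) * (C * lam ^+ n) * ddiam dist.
  move=> x; rewrite ler_norml; apply/andP; split.
    have := sup_bound_s Lp hs2 HL Hmu Hmean n x; rewrite mulN1r; lra.
  by have := sup_bound_s Lp hs1 HL Hmu Hmean n x; rewrite mul1r.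
have Hb2 : forall x y, `|iter n P z x - iter n P z y| <= (dLip dist z) * (C * lam ^+ n) * dist x y.
  move=> x y; rewrite ler_norml; apply/andP; split; last exact: lip_bound.
  have := lip_bound Lp HL n y x; rewrite (dist_sym hm y x); lra.
have LK0 : 0 <= (dLip dist z) * (C * lam ^+ n) by rewrite mulr_ge0 // ltW.
apply: (le_trans (lerD (dsupnorm_le (mulr_ge0 LK0 D0) Hb1) (dLip_le hm LK0 Hb2))).
rewrite (_ : (dLip dist z) * (C * lam ^+ n) * ddiam dist + (dLip dist z) * (C * lam ^+ n) =
  (1 + ddiam dist) * C * (dLip dist z) * lam ^+ n) //; ring.
Qed.

Lemma part2 (g : T -> R) : (forall x, 0 < g x) -> dlipschitz dist g ->
  (forall x, transfer F A g x = rho * g x) -> exists c : R, forall x, g x = c * h x.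
Proof.
move=> gpos gl geig.
pose psi := fun x => g x / h x.
have rho0 : rho != 0 by rewrite gt_eqF ?rho_gt0.
have Ppsi : forall y, P psi y = psi y.
  move=> y; rewrite /P /normalized_op.
  have -> : (fun z => h z * psi z) = g.
    by apply: funext => z; rewrite /psi mulrC divfK // gt_eqF.
  rewrite geig /psi; field.
  by rewrite rho0 /= gt_eqF.
have Ipsi : forall n y, iter n P psi y = psi y.
  elim => [//|n IH] y /=.
  by rewrite (_ : iter n P psi = psi) ?Ppsi //; apply: funext.
have [m m0 Hm] := cont_pos_lb hc (lip_cont hm hh) hpos.
have [Mg HMg] := cont_bounded hc (lip_cont hm gl).
have [Lg HLg] := gl; have [Lh HLh] := hh.
set Lp := `|Lg| / m + Mg * `|Lh| / (m * m) + 1.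
have Mg0 : 0 <= Mg by apply: le_trans (HMg point); exact: normr_ge0.
have Lpp : 0 < Lp.
  by rewrite /Lp ltr_wpDl // addr_ge0 // ?divr_ge0 ?mulr_ge0 // ltW.
have Hpsi : forall a b, `|psi a - psi b| <= Lp * dist a b.
  move=> a b; have hpa := hpos a; have hpb := hpos b.
  have E : psi a - psi b = (g a - g b) * (h a)^-1 + g b * (h b - h a) * (h a * h b)^-1.
    by rewrite /psi; field; rewrite !gt_eqF.
  rewrite E; apply: (le_trans (ler_normD _ _)); rewrite !normrM.
  rewrite [`|(h a)^-1|]ger0_norm; last by rewrite invr_ge0 ltW.
  rewrite [`|(h a * h b)^-1|]ger0_norm; last by rewrite invr_ge0 mulr_ge0 // ltW.
  have dab := dist_ge0 hm a b.
  have i1 : (h a)^-1 <= m^-1 by rewrite lef_pV2 ?posrE.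
  have i2 : (h a * h b)^-1 <= (m * m)^-1.
    by rewrite lef_pV2 ?posrE ?mulr_gt0 // ler_pM // ltW.
  have n1 : `|g a - g b| <= `|Lg| * dist a b.
    by apply: (le_trans (HLg a b)); apply: ler_wpM2r => //; exact: ler_norm.
  have n2 : `|h b - h a| <= `|Lh| * dist a b.
    apply: (le_trans (HLh b a)); rewrite (dist_sym hm b a).
    by apply: ler_wpM2r => //; exact: ler_norm.
  have p1 : `|g a - g b| * (h a)^-1 <= `|Lg| * dist a b * m^-1.
    by apply: ler_pM => //; rewrite invr_ge0 ltW.
  have p2 : `|g b| * `|h b - h a| * (h a * h b)^-1 <= Mg * (`|Lh| * dist a b) * (m * m)^-1.
    apply: ler_pM; [by rewrite mulr_ge0 | by rewrite invr_ge0 mulr_ge0 // ltW | | exact: i2].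
    by apply: ler_pM => //; exact: HMg.
  apply: (le_trans (lerD p1 p2)).
  rewrite /Lp.
  have -> : `|Lg| * dist a b * m^-1 + Mg * (`|Lh| * dist a b) * (m * m)^-1 =
    (`|Lg| / m + Mg * `|Lh| / (m * m)) * dist a b by ring.
  by rewrite [X in _ <= X]mulrDl mul1r lerDl.
have Heq : forall a b, psi a - psi b <= 0.
  move=> a b; apply: (@le0_geo _ (Lp * C * dist a b)) => n.
  have := lip_bound Lpp Hpsi n a b; rewrite !Ipsi.
  by rewrite (_ : Lp * (C * lam ^+ n) * dist a b = Lp * C * dist a b * lam ^+ n) //; ring.
exists (psi point) => x.
have : psi x = psi point.
  by apply/eqP; rewrite eq_le -subr_le0 Heq /= -subr_le0 Heq.
by move=> <-; rewrite /psi divfK // gt_eqF.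
Qed.

End Main.

End Aux.
Import Aux.

Theorem mainTheorem3 (R : realType) (d0 : measure_display) (T : measurableType d0)
  (dist : T -> T -> R) (k : nat) (F : T -> 'I_k -> T) (theta : R) (A : T -> R)
  (rho : R) (h : T -> R) (C lam : R) (mu : probability T R) :
  is_dmetric dist -> dcompact dist -> borel_of_metric dist ->
  0 < theta < 1 -> is_ICS dist F theta -> has_attractor_all F ->
  dlipschitz dist A ->
  (* rho is the spectral radius of the transfer operator on C(Omega) *)
  (fun n : nat => dopnorm dist (iter n.+1 (transfer F A)) `^ (n.+1%:R)^-1)
     @ \oo --> rho ->
  (forall x, 0 < h x) -> dlipschitz dist h ->
  (forall x, transfer F A h x = rho * h x) ->
  0 < C -> 0 < lam < 1 ->
  (forall (n : nat) (m1 m2 m1n m2n : probability T R),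
     is_dual_iter dist (normalized_op F A h rho) n m1 m1n ->
     is_dual_iter dist (normalized_op F A h rho) n m2 m2n ->
     (W1 dist m1n m2n <= (C * lam ^+ n)%:E * W1 dist m1 m2)%E) ->
  is_dual_image dist (normalized_op F A h rho) mu mu ->
  (forall zeta : T -> R, dlipschitz dist zeta ->
     (\int[mu]_x (zeta x)%:E = 0)%E ->
     forall n : nat,
       dsupnorm (iter n (normalized_op F A h rho) zeta)
         + dLip dist (iter n (normalized_op F A h rho) zeta)
       <= (1 + ddiam dist) * C * dLip dist zeta * lam ^+ n)
  /\
  (forall g : T -> R, (forall x, 0 < g x) -> dlipschitz dist g ->
     (forall x, transfer F A g x = rho * g x) ->
     exists c : R, forall x, g x = c * h x).
Proof.
move=> hm hc hb hth hics hatt hA hrho hpos hh heig HC Hlam HW Hmu.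
split.
- exact: (part1 hm hc hb hics hatt hA hpos hh heig HC Hlam HW Hmu).
- exact: (part2 hm hc hb hics hatt hA hpos hh heig HC Hlam HW).
Qed.
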